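(* Let $r\geq 2$, let $\mathcal{G}$ and $\mathcal{H}$ be $r$-uniform hypergraphs with $u\in V(\mathcal{G})$ and $v\in V(\mathcal{H})$, and let $m$ be a positive integer. Then $\varphi\big((\mathcal{G}_u\cdot m\mathcal{H}_v)\cup(m-1)\mathcal{G},x\big)=\varphi\big((\mathcal{H}_v\cdot m\mathcal{G}_u)\cup(m-1)\mathcal{H},x\big)$.
   Context: For an $r$-uniform hypergraph $\mathcal{K}$ on $n$ vertices, $m(\mathcal{K},k)$ is the number of sets of $k$ pairwise disjoint edges ($m(\mathcal{K},0)=1$) and $\varphi(\mathcal{K},x)=\sum_{k\geq0}(-1)^km(\mathcal{K},k)x^{n-kr}$ is the matching polynomial. $\cup$ denotes disjoint union and $k\mathcal{G}$ the disjoint union of $k$ copies of $\mathcal{G}$ ($0\mathcal{G}$ is empty). $\mathcal{G}_u\cdot m\mathcal{H}_v$ is the hypergraph obtained from $\mathcal{G}$ and $m$ disjoint copies of $\mathcal{H}$ by adding $m$ new edges $e_1,\dots,e_m$, where $e_i=\{v_{i,1},\dots,v_{i,r}\}$, $v_{i,1}$ is identified with $u$, $v_{i,r}$ is identified with the vertex $v$ of the $i$-th copy of $\mathcal{H}$, and $v_{i,2},\dots,v_{i,r-1}$ are new vertices (all distinct). $\mathcal{H}_v\cdot m\mathcal{G}_u$ is defined analogously with the roles of $(\mathcal{G},u)$ and $(\mathcal{H},v)$ exchanged. *)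

(* Defs.v *)
From mathcomp Require Import all_boot all_order all_algebra.
Set Implicit Arguments. Unset Strict Implicit. Unset Printing Implicit Defensive.
Import GRing.Theory.
Local Open Scope ring_scope.

Definition uniform (V : finType) (r : nat) (E : {set {set V}}) : Prop :=
  forall e, e \in E -> #|e| = r.

Definition is_matching (V : finType) (E M : {set {set V}}) : bool :=
  (M \subset E) &&
  [forall e1 in M, forall e2 in M, (e1 != e2) ==> [disjoint e1 & e2]].

Definition nmatch (V : finType) (E : {set {set V}}) (k : nat) : nat :=
  #|[set M : {set {set V}} | is_matching E M & #|M| == k]|.

(* phi(K,x) = sum_k (-1)^k m(K,k) x^(n - k r), n = #|V|.  For an r-uniform K
   with r >= 1, m(K,k) = 0 whenever k r > n, so summing k <= n suffices. *)
Definition matchpoly (V : finType) (r : nat) (E : {set {set V}}) : {poly int} :=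
  \sum_(k < #|V|.+1) ((-1) ^+ k *+ nmatch E k) *: 'X^(#|V| - k * r).

Definition hunion (V1 V2 : finType) (E1 : {set {set V1}}) (E2 : {set {set V2}})
  : {set {set (V1 + V2)%type}} :=
  [set (@inl V1 V2) @: e | e : {set V1} in E1] :|: [set (@inr V1 V2) @: e | e : {set V2} in E2].

Definition hcopies (k : nat) (V : finType) (E : {set {set V}})
  : {set {set ('I_k * V)%type}} :=
  \bigcup_(i < k) [set (pair i) @: e | e : {set V} in E].

(* G_u . m H_v : vertices = V(G) + m copies of V(H) + m*(r-2) new vertices;
   edges = edges of G, of each copy of H, and the m new edges
   e_i = {u, v_i} U {new vertices (i, j), j < r-2}. *)
Definition attach (r m : nat) (VG VH : finType) (EG : {set {set VG}}) (u : VG)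
  (EH : {set {set VH}}) (v : VH)
  : {set {set ((VG + ('I_m * VH)) + ('I_m * 'I_(r - 2)))%type}} :=
  [set inl @: e | e : {set (VG + ('I_m * VH))%type} in hunion EG (hcopies m EH)] :|:
  [set ([set inl (inl u)] :|: [set inl (inr (i, v))]
         :|: [set inr (i, j) | j : 'I_(r - 2)]) | i : 'I_m].

(* Main.v *)
Require Import Defs.
From mathcomp Require Import all_boot all_order all_algebra.
From mathcomp Require Import ring zify.
Set Implicit Arguments. Unset Strict Implicit. Unset Printing Implicit Defensive.
Import GRing.Theory.

Section Helpers.
Local Open Scope ring_scope.

Definition gen (V : finType) (E : {set {set V}}) : {poly int} :=
  \sum_(M | is_matching E M) 'X^#|M|.

Definition nz (V : finType) (E : {set {set V}}) := forall e, e \in E -> e != set0.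

Lemma matchingP (V : finType) (E M : {set {set V}}) :
  reflect (M \subset E /\ forall e1 e2, e1 \in M -> e2 \in M -> e1 != e2 -> [disjoint e1 & e2])
          (is_matching E M).
Proof.
apply: (iffP andP) => -[H1 H2]; split => //.
  move=> e1 e2 i1 i2 ne; move/forall_inP: H2 => /(_ e1 i1) /forall_inP /(_ e2 i2).
  by move/implyP; apply.
apply/forall_inP => e1 i1; apply/forall_inP => e2 i2; apply/implyP; exact: H2.
Qed.

Lemma disj_img (V W : finType) (f : V -> W) (A B : {set V}) :
  injective f -> [disjoint f @: A & f @: B] = [disjoint A & B].
Proof.
move=> fi; rewrite -!setI_eq0 -imsetI; last by move=> x y _ _; apply: fi.
by rewrite imset_eq0.
Qed.

Lemma gen_img (V W : finType) (f : V -> W) (E : {set {set V}}) :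
  injective f -> gen [set f @: e | e : {set V} in E] = gen E.
Proof.
move=> fi; rewrite /gen.
have hi := imset_inj (imset_inj fi).
set h := fun M : {set {set V}} => [set f @: e | e : {set V} in M].
have -> : \sum_(M | is_matching [set f @: e | e : {set V} in E] M) 'X^#|M| =
          \sum_(M in h @: [set M | is_matching E M]) ('X^#|M| : {poly int}).
  apply: eq_bigl => M'; apply/idP/imsetP.
    move/matchingP=> [Hs Hd].
    exists [set e : {set V} in E | f @: e \in M'].
      rewrite inE; apply/matchingP; split.
        by apply/subsetP => e; rewrite inE => /andP[].
      move=> e1 e2; rewrite !inE => /andP[_ i1] /andP[_ i2] ne.
      rewrite -(disj_img _ _ fi); apply: Hd => //.
      by apply: contra ne => /eqP/(imset_inj fi) ->.
    apply/setP => y; apply/idP/imsetP.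
      move=> yin; have := subsetP Hs _ yin; case/imsetP => e ein yE.
      by exists e => //; rewrite inE ein -yE.
    by move=> [e]; rewrite inE => /andP[_ ?] ->.
  move=> [M]; rewrite inE => /matchingP[Hs Hd] ->; apply/matchingP; split.
    by apply: imsetS.
  move=> e1' e2' /imsetP[e1 i1 ->] /imsetP[e2 i2 ->] ne.
  rewrite disj_img //; apply: Hd => //; by apply: contra ne => /eqP ->.
rewrite big_imset /=; last by move=> x y _ _; apply: hi.
apply: congr_big => // M; first by rewrite inE.
by rewrite /h card_imset //; apply: imset_inj.
Qed.


Definition avoid (V : finType) (A S : {set {set V}}) :=
  [set a in A | [forall s in S, [disjoint a & s]]].

Lemma gen_cond (V : finType) (A N : {set {set V}}) : A :&: N = set0 ->
  gen (A :|: N) = \sum_(S | is_matching N S) 'X^#|S| * gen (avoid A S).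
Proof.
move=> AN; rewrite /gen.
have AN' : forall x, x \in A -> x \in N -> False.
  by move=> x xA xN; move/setP: AN => /(_ x); rewrite !inE xA xN.
under [RHS]eq_bigr do rewrite big_distrr /=.
rewrite pair_big_dep /=.
rewrite (reindex_onto (fun M => (M :&: N, M :&: A)) (fun p => p.1 :|: p.2)) /=; last first.
  move=> [S T] /= /andP[/matchingP[HS _] /matchingP[HT _]].
  have HT' : T \subset A by apply: subset_trans HT _; apply/subsetP => x; rewrite inE => /andP[].
  congr pair; apply/setP => x; rewrite !inE; case xS: (x \in S); case xT: (x \in T) => //=.
  all: try first [ by rewrite (subsetP HS) | by rewrite (subsetP HT')
             | by apply/negbTE/negP => xN; exfalso; apply: (AN' x); rewrite ?(subsetP HT') ?(subsetP HS) ].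
  - by apply/negbTE/negP => xN; exfalso; apply: (AN' x) => //; rewrite (subsetP HT').
  - by apply/negbTE/negP => xA; exfalso; apply: (AN' x) => //; rewrite (subsetP HS).
apply: eq_big.
  move=> M; apply/idP/idP.
    move/matchingP=> [Hs Hd].
    have Mu : (M :&: N) :|: (M :&: A) = M.
      apply/setP => x; rewrite !inE; case xM: (x \in M) => //=.
      by have := subsetP Hs x xM; rewrite inE orbC.
    rewrite Mu eqxx andbT; apply/andP; split.
      apply/matchingP; split; first exact: subsetIr.
      by move=> e1 e2; rewrite !inE => /andP[i1 _] /andP[i2 _]; apply: Hd.
    apply/matchingP; split.
      apply/subsetP => x; rewrite !inE => /andP[xM xA]; rewrite xA /=.
      apply/forall_inP => s; rewrite inE => /andP[sM sN]; apply: Hd => //.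
      by apply/eqP => xs; subst; case: (AN' s).
    by move=> e1 e2; rewrite !inE => /andP[i1 _] /andP[i2 _]; apply: Hd.
  move=> /andP[/andP[/matchingP[HS HSd] /matchingP[HT HTd]] /eqP Mu].
  apply/matchingP; split.
    rewrite -Mu; apply/subsetP => x; rewrite !inE => /orP[/andP[_ ->]|/andP[_ ->]] //.
    by rewrite orbT.
  have cases : forall e, e \in M -> (e \in M :&: N) || (e \in M :&: A).
    by move=> e; rewrite -{1}Mu inE.
  have cross : forall e1 e2, e1 \in M :&: N -> e2 \in M :&: A -> [disjoint e2 & e1].
    move=> e1 e2 i1 i2; have := subsetP HT e2 i2; rewrite inE => /andP[_ /forall_inP]; by apply.
  move=> e1 e2 i1 i2 ne; move: (cases e1 i1) (cases e2 i2) => /orP[j1|j1] /orP[j2|j2].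
  - by apply: HSd.
  - by rewrite disjoint_sym; apply: cross.
  - by apply: cross.
  - by apply: HTd.
move=> M /matchingP[Hs _]; rewrite -exprD; congr (_ ^+ _).
have E : M :\: N = M :&: A.
  apply/setP => x; rewrite !inE; case xM: (x \in M); rewrite ?andbF //=.
  have := subsetP Hs x xM; rewrite inE; case xA: (x \in A); case xN: (x \in N) => //=.
  by exfalso; apply: (AN' x).
by rewrite -(cardsID N M) E.
Qed.

Lemma gen_split (V : finType) (A N : {set {set V}}) : A :&: N = set0 ->
  (forall a s, a \in A -> s \in N -> [disjoint a & s]) ->
  gen (A :|: N) = gen A * gen N.
Proof.
move=> AN Hd; rewrite gen_cond // mulrC /gen big_distrl /=.
apply: eq_bigr => S /matchingP[HS _]; congr (_ * _); apply: eq_bigl => M.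
congr is_matching; apply/setP => a; rewrite inE; case aA: (a \in A) => //=.
apply/forall_inP => s sS; apply: Hd => //; exact: subsetP HS s sS.
Qed.

Lemma gen0 (V : finType) : gen (set0 : {set {set V}}) = 1.
Proof.
rewrite /gen (eq_bigl (fun M => M == set0)) ?big_pred1_eq ?cards0 ?expr0 //.
move=> M; apply/idP/idP.
  by move/matchingP=> [Hs _]; rewrite -subset0.
move/eqP ->; apply/matchingP; split => //; by move=> e1 e2; rewrite inE.
Qed.


Lemma in_bigcup_seq (V : finType) (I : eqType) (s : seq I) (F : I -> {set {set V}}) e :
  e \in \big[@setU _/set0]_(i <- s) F i -> exists2 j, j \in s & e \in F j.
Proof.
elim: s => [|i s IH]; first by rewrite big_nil inE.
rewrite big_cons inE => /orP[H|/IH[j js H]]; first by exists i; rewrite ?inE ?eqxx.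
by exists j; rewrite // inE js orbT.
Qed.

Lemma disj_self (V : finType) (e : {set V}) : [disjoint e & e] -> e = set0.
Proof. by rewrite -setI_eq0 setIid => /eqP. Qed.

Lemma gen_bigcup (V : finType) (I : eqType) (s : seq I) (F : I -> {set {set V}}) :
  uniq s -> (forall i, nz (F i)) ->
  (forall i j, i != j -> forall e1 e2, e1 \in F i -> e2 \in F j -> [disjoint e1 & e2]) ->
  gen (\big[@setU _/set0]_(i <- s) F i) = \prod_(i <- s) gen (F i).
Proof.
move=> + Fnz Fd; elim: s => [|i s IH] /=; first by rewrite !big_nil gen0.
move=> /andP[ni us]; rewrite !big_cons gen_split ?IH //.
  apply/setP => e; rewrite !inE; apply/negP => /andP[e1 /in_bigcup_seq[j js e2]].
  have ij : i != j by apply: contra ni => /eqP ->.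
  by have := Fnz i e e1; rewrite (disj_self (Fd _ _ ij _ _ e1 e2)) eqxx.
move=> a b ai /in_bigcup_seq[j js bj]; apply: (Fd i j) => //.
by apply: contra ni => /eqP ->.
Qed.

Lemma nz_img (V W : finType) (f : V -> W) (E : {set {set V}}) :
  nz E -> nz [set f @: e | e : {set V} in E].
Proof.
move=> H e' /imsetP[e eE ->]; rewrite imset_eq0; exact: H.
Qed.

Lemma gen_hunion (V1 V2 : finType) (E1 : {set {set V1}}) (E2 : {set {set V2}}) :
  nz E1 -> gen (hunion E1 E2) = gen E1 * gen E2.
Proof.
move=> nz1; rewrite /hunion gen_split.
- by rewrite !gen_img //; [apply: inr_inj | apply: inl_inj].
- apply/setP => e; rewrite !inE; apply/negP => /andP[/imsetP[a aE ->] /imsetP[b bE]].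
  move=> ab; have := nz1 a aE; apply/negP; rewrite negbK; apply/eqP/setP => x.
  rewrite inE; apply/negP => xa; have : inl x \in [set inr y | y in b] by rewrite -ab imset_f.
  by case/imsetP.
- move=> a b /imsetP[a' _ ->] /imsetP[b' _ ->]; rewrite -setI_eq0; apply/eqP/setP => x.
  rewrite !inE; apply/negP => /andP[/imsetP[y _ ->] /imsetP[z _]] //.
Qed.

Definition copiesF (k : nat) (V : finType) (F : 'I_k -> {set {set V}})
  : {set {set ('I_k * V)%type}} :=
  \bigcup_(i < k) [set (pair i) @: e | e : {set V} in F i].

Lemma gen_copiesF (k : nat) (V : finType) (F : 'I_k -> {set {set V}}) :
  (forall i, nz (F i)) -> gen (copiesF F) = \prod_(i < k) gen (F i).
Proof.
move=> Fnz; rewrite /copiesF gen_bigcup ?index_enum_uniq //.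
- by apply: eq_bigr => i _; rewrite gen_img // => x y [].
- by move=> i; apply: nz_img.
move=> i j ij _ _ /imsetP[a _ ->] /imsetP[b _ ->]; rewrite -setI_eq0; apply/eqP/setP => x.
rewrite !inE; apply/negP => /andP[/imsetP[y _ ->] /imsetP[z _ [E _]]].
by move: ij; rewrite E eqxx.
Qed.


Lemma star_sum (V : finType) (I : finType) (Nf : I -> {set V}) (F : {set {set V}} -> {poly int}) :
  injective Nf -> (forall i j, ~~ [disjoint Nf i & Nf j]) ->
  \sum_(S | is_matching [set Nf i | i : I] S) F S = F set0 + \sum_(i : I) F [set Nf i].
Proof.
move=> Ni Nd.
rewrite (bigD1 set0) /=; last first.
  by apply/matchingP; split; [apply: sub0set | move=> e1 e2; rewrite inE].
congr (_ + _).
have hi : {in [set: I] &, injective (fun i => [set Nf i])}.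
  by move=> i j _ _ /set1_inj /Ni.
rewrite [RHS](eq_bigl (fun i => i \in [set: I])); last by move=> i; rewrite inE.
rewrite -(big_imset F hi) /=; apply: eq_bigl => S; apply/idP/idP.
  move=> /andP[/matchingP[Hs Hd] /set0Pn[s sS]].
  have := subsetP Hs s sS => /imsetP[i _ si].
  apply/imsetP; exists i; rewrite ?inE //; apply/setP => t; rewrite inE.
  apply/idP/eqP => [tS|->]; last by rewrite -si.
  apply/eqP; apply: contraT => tn; have := subsetP Hs t tS => /imsetP[j _ tj].
  by have := Nd j i; rewrite -tj Hd // -si.
move=> /imsetP[i _ ->]; apply/andP; split.
  apply/matchingP; split; first by rewrite sub1set imset_f.
  by move=> e1 e2; rewrite !inE => /eqP -> /eqP ->; rewrite eqxx.
by apply/set0Pn; exists (Nf i); rewrite inE.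
Qed.


Definition restr (V : finType) (E : {set {set V}}) (X : {set V}) :=
  [set e in E | [disjoint e & X]].

Lemma avoid1 (V : finType) (A : {set {set V}}) e : avoid A [set e] = restr A e.
Proof.
apply/setP => a; rewrite !inE; congr (_ && _); apply/forall_inP/idP.
  by move=> H; apply: H; rewrite inE.
by move=> H s; rewrite inE => /eqP ->.
Qed.

Lemma disj_img_pre (V W : finType) (f : V -> W) (e : {set V}) (X : {set W}) :
  [disjoint f @: e & X] = [disjoint e & f @^-1: X].
Proof. by rewrite !disjoints_subset sub_imset_pre preimsetC. Qed.

Lemma restr_img (V W : finType) (f : V -> W) (E : {set {set V}}) (X : {set W}) :
  restr [set f @: e | e : {set V} in E] X = [set f @: e | e : {set V} in restr E (f @^-1: X)].
Proof.
apply/setP => y; rewrite inE; apply/andP/imsetP.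
  move=> [/imsetP[e eE ->] d]; exists e => //; by rewrite inE eE -disj_img_pre.
by move=> [e]; rewrite inE => /andP[eE d] ->; rewrite imset_f // disj_img_pre.
Qed.

Lemma restrU (V : finType) (A B : {set {set V}}) X :
  restr (A :|: B) X = restr A X :|: restr B X.
Proof. by apply/setP => e; rewrite !inE andb_orl. Qed.

Lemma restr_set0 (V : finType) (X : {set V}) : restr set0 X = set0.
Proof. by apply/setP => e; rewrite !inE. Qed.

Lemma restr0 (V : finType) (E : {set {set V}}) : restr E set0 = E.
Proof. by apply/setP => e; rewrite !inE disjoints_subset setC0 subsetT andbT. Qed.

Lemma nz_restr (V : finType) (E : {set {set V}}) X : nz E -> nz (restr E X).
Proof. by move=> H e; rewrite inE => /andP[/H]. Qed.

Lemma restr_hunion (V1 V2 : finType) (E1 : {set {set V1}}) (E2 : {set {set V2}}) X :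
  restr (hunion E1 E2) X = hunion (restr E1 (inl @^-1: X)) (restr E2 (inr @^-1: X)).
Proof. by rewrite /hunion restrU !restr_img. Qed.

Lemma restr_copiesF (k : nat) (V : finType) (F : 'I_k -> {set {set V}}) X :
  restr (copiesF F) X = copiesF (fun j => restr (F j) (pair j @^-1: X)).
Proof.
rewrite /copiesF (big_morph (fun E => restr E X) (fun A B => restrU A B X) (@restr_set0 _ X)).
by apply: eq_bigr => i _; rewrite restr_img.
Qed.


Lemma nzU (V : finType) (A B : {set {set V}}) : nz A -> nz B -> nz (A :|: B).
Proof. by move=> HA HB e; rewrite inE => /orP[/HA|/HB]. Qed.

Lemma nz_copiesF (k : nat) (V : finType) (F : 'I_k -> {set {set V}}) :
  (forall i, nz (F i)) -> nz (copiesF F).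
Proof. by move=> H e /bigcupP[i _]; apply: nz_img. Qed.

Lemma nz_hunion (V1 V2 : finType) (E1 : {set {set V1}}) (E2 : {set {set V2}}) :
  nz E1 -> nz E2 -> nz (hunion E1 E2).
Proof. by move=> H1 H2; apply: nzU; apply: nz_img. Qed.

Lemma avoid0 (V : finType) (A : {set {set V}}) : avoid A set0 = A.
Proof.
by apply/setP => a; rewrite !inE; case: (a \in A) => //=; apply/forall_inP => s; rewrite inE.
Qed.

Lemma gen_hcopies (k : nat) (V : finType) (E : {set {set V}}) :
  nz E -> gen (hcopies k E) = gen E ^+ k.
Proof.
move=> H; rewrite -[hcopies k E]/(copiesF (fun _ => E)) gen_copiesF //.
by rewrite prodr_const card_ord.
Qed.

Section Attach.
Variables (r m : nat) (VG VH : finType) (EG : {set {set VG}}) (u : VG)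
  (EH : {set {set VH}}) (v : VH).

Definition Nf (i : 'I_m) : {set ((VG + ('I_m * VH)) + ('I_m * 'I_(r - 2)))%type} :=
  [set inl (inl u)] :|: [set inl (inr (i, v))] :|: [set inr (i, j) | j : 'I_(r - 2)].

Lemma inNf i x : (inl x \in Nf i) = (x == inl u) || (x == inr (i, v)).
Proof.
rewrite /Nf !inE !(inj_eq inl_inj); case: (x == inl u) => //=; case: (x == inr (i, v)) => //=.
by apply/negbTE/imsetP => -[j _].
Qed.

Lemma attachE : attach r m EG u EH v =
  [set inl @: e | e : {set (VG + ('I_m * VH))%type} in hunion EG (hcopies m EH)] :|: [set Nf i | i : 'I_m].
Proof. by []. Qed.

Lemma nz_attach : nz EG -> nz EH -> nz (attach r m EG u EH v).
Proof.
move=> H1 H2; rewrite attachE; apply: nzU.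
  apply: nz_img; apply: nz_hunion => //; exact: nz_copiesF.
move=> e /imsetP[i _ ->]; apply/set0Pn; exists (inl (inl u)); by rewrite inNf eqxx.
Qed.

Lemma term_i i : nz EG -> nz EH ->
  gen (restr [set inl @: e | e : {set (VG + ('I_m * VH))%type} in hunion EG (hcopies m EH)] (Nf i))
  = gen (restr EG [set u]) * gen (restr EH [set v]) * gen EH ^+ m.-1.
Proof.
move=> H1 H2.
rewrite restr_img gen_img; last exact: inl_inj.
rewrite restr_hunion gen_hunion; last exact: nz_restr.
have P1 : inl @^-1: (inl @^-1: Nf i) = [set u].
  apply/setP => x; rewrite in_set1 in_set in_set inNf.
  by rewrite /= orbF.
have P2 : inr @^-1: (inl @^-1: Nf i) = [set (i, v)].
  apply/setP => x; rewrite in_set1 in_set in_set inNf.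
  by [].
rewrite P1 P2 -mulrA; congr (_ * _).
rewrite -[hcopies m EH]/(copiesF (fun _ => EH)) restr_copiesF gen_copiesF; last first.
  by move=> j; apply: nz_restr.
rewrite (bigD1 i) //=; congr (_ * _).
  congr (gen (restr _ _)); apply/setP => x; rewrite !inE.
  by apply/eqP/eqP => [[]|->].
rewrite (eq_bigr (fun _ => gen EH)); last first.
  move=> j ji; rewrite (_ : pair j @^-1: _ = set0) ?restr0 //.
  apply/setP => x; rewrite !inE; apply/eqP => -[E _]; by rewrite E eqxx in ji.
by rewrite prodr_const cardC1 card_ord.
Qed.

Lemma gen_attach : nz EG -> nz EH ->
  gen (attach r m EG u EH v) = gen EG * gen EH ^+ m +
    (m%:R * 'X) * (gen (restr EG [set u]) * gen (restr EH [set v]) * gen EH ^+ m.-1).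
Proof.
move=> H1 H2; rewrite attachE gen_cond; last first.
  apply/setP => e; rewrite !inE; apply/negP => /andP[/imsetP[e' e'E ->] /imsetP[i _ E]].
  have h1 : inl (inl u) \in Nf i by rewrite inNf eqxx.
  have h2 : inl (inr (i, v)) \in Nf i by rewrite inNf eqxx orbT.
  move: h1 h2; rewrite -E !(mem_imset _ _ inl_inj).
  move: e'E; rewrite inE => /orP[] /imsetP[g _ ->].
    by move=> _ /imsetP[].
  by move=> /imsetP[].
rewrite star_sum; last first.
- move=> i j; rewrite -setI_eq0; apply/set0Pn; exists (inl (inl u)).
  by rewrite inE !inNf !eqxx.
- move=> i j E; have : inl (inr (i, v)) \in Nf j by rewrite -E inNf eqxx orbT.
  by rewrite inNf /= => /eqP [].
rewrite cards0 expr0 mul1r avoid0 gen_img; last exact: inl_inj.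
rewrite gen_hunion ?gen_hcopies //; congr (_ + _).
under eq_bigr => i _ do rewrite cards1 expr1 avoid1 (term_i _ H1 H2).
rewrite big_const_ord iter_addr_0 -mulr_natl; ring.
Qed.

End Attach.

End Helpers.

Section Final.
Local Open Scope ring_scope.

Lemma coef_gen (V : finType) (E : {set {set V}}) k : (gen E)`_k = (nmatch E k)%:R.
Proof.
rewrite /gen /nmatch coef_sum -sum1_card natr_sum.
rewrite big_mkcond [RHS]big_mkcond /=; apply: eq_bigr => M _; rewrite coefXn inE.
case: (is_matching E M) => //=; rewrite eq_sym; by case: (#|M| == k).
Qed.

Lemma matchpoly_gen (r : nat) (V1 V2 : finType) (E1 : {set {set V1}}) (E2 : {set {set V2}}) :
  #|V1| = #|V2| -> gen E1 = gen E2 -> matchpoly r E1 = matchpoly r E2.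
Proof.
move=> Hc Hg; rewrite /matchpoly Hc; apply: eq_bigr => k _.
have : (nmatch E1 k)%:R = (nmatch E2 k)%:R :> int by rewrite -!coef_gen Hg.
by move/eqP; rewrite Num.Theory.eqr_nat => /eqP ->.
Qed.

Lemma nz_uniform (V : finType) (r : nat) (E : {set {set V}}) :
  (0 < r)%N -> uniform r E -> nz E.
Proof.
move=> r0 H e eE; apply/eqP => e0; have := H e eE; rewrite e0 cards0 => r0'.
by rewrite -r0' in r0.
Qed.

End Final.

Theorem lemma9 (r : nat) (VG VH : finType)
  (EG : {set {set VG}}) (EH : {set {set VH}}) (u : VG) (v : VH) (m : nat) :
  (2 <= r)%N -> uniform r EG -> uniform r EH -> (0 < m)%N ->
  matchpoly r (hunion (attach r m EG u EH v) (hcopies m.-1 EG)) =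
  matchpoly r (hunion (attach r m EH v EG u) (hcopies m.-1 EH)).
Proof.
move=> r2 uG uH m0.
have r0 : (0 < r)%N by apply: leq_trans r2.
have nG := nz_uniform r0 uG; have nH := nz_uniform r0 uH.
apply: matchpoly_gen.
  rewrite !card_sum !card_prod !card_ord.
  case: m m0 => // m' _ /=; rewrite !mulSn; lia.
rewrite gen_hunion; last exact: nz_attach.
rewrite gen_hunion; last exact: nz_attach.
rewrite !gen_attach // !gen_hcopies //.
case: m m0 => // m' _ /=; rewrite !exprS; ring.
Qed.
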